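(* Let $V=\bigoplus_{n\in\mathbb{Z}}V_n$ be an $\mathcal{H}$-module vertex algebra such that $V_n=0$ for $n<0$. Suppose $(\cdot,\cdot)$ is a bilinear form on $V$ such that $(Y(v,z)w,w')=(w,Y(e^{zL_1}(-z^{-2})^{\deg}v,z^{-1})w')$ for all $v,w,w'\in V$, and $(V_m,V_n)=0$ for all $m\ne n$. Then $(\cdot,\cdot)$ is symmetric.
   Context: Throughout, $\mathbb{F}$ is an algebraically closed field of odd prime characteristic $p$; vertex algebras are over $\mathbb{F}$. Every vertex algebra $V$ is a module for the bialgebra $\mathcal{B}$ with basis $\{\mathcal{D}^{(n)}\}_{n\in\mathbb{N}}$, $\mathcal{D}^{(m)}\mathcal{D}^{(n)}=\binom{m+n}{n}\mathcal{D}^{(m+n)}$, via $\mathcal{D}^{(n)}v=v_{-n-1}\mathbf{1}$. $\mathcal{H}$: let $\mathfrak{sl}_2$ over $\mathbb{C}$ have basis $L_{-1},L_0,L_1$ with $[L_1,L_{-1}]=2L_0$, $[L_0,L_{\pm1}]=\mp L_{\pm1}$; put $L_{\pm1}^{(n)}=L_{\pm1}^n/n!$, $L_0^{(n)}=\binom{-2L_0}{n}$ in $U(\mathfrak{sl}_2)$; $U(\mathfrak{sl}_2)_{\mathbb{Z}}$ is the $\mathbb{Z}$-span of the $L_{-1}^{(i)}L_0^{(j)}L_1^{(k)}$, and $\mathcal{H}=\mathbb{F}\otimes_{\mathbb{Z}}U(\mathfrak{sl}_2)_{\mathbb{Z}}$. $e^{zL_{\pm1}}=\sum_{n\ge0}z^nL_{\pm1}^{(n)}$.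 For $v$ homogeneous of degree $n$, $f(z)^{\deg}v:=f(z)^nv$, extended linearly. A $\mathbb{Z}$-graded vertex algebra: $V=\bigoplus V_n$, $\mathbf{1}\in V_0$, $u_rV_n\subset V_{m+n-r-1}$ for $u\in V_m$. A $\mathbb{Z}$-graded weight $\mathcal{H}$-module: $W=\bigoplus W_n$ with $\mathcal{H}$-action, $L_{\pm1}^{(r)}W_n\subset W_{n\mp r}$, $L_0^{(r)}|_{W_n}=\binom{-2n}{r}$. An $\mathcal{H}$-module vertex algebra: a $\mathbb{Z}$-graded vertex algebra $V$ which is a $\mathbb{Z}$-graded weight $\mathcal{H}$-module with $L_{-1}^{(n)}=\mathcal{D}^{(n)}$, such that $V_n=0$ for $n\ll0$, $L_1^{(n)}\mathbf{1}=\delta_{n,0}\mathbf{1}$, and $e^{zL_1}Y(v,z_0)e^{-zL_1}=Y\bigl(e^{z(1-zz_0)L_1}(1-zz_0)^{-2\deg}v,z_0/(1-zz_0)\bigr)$ for $v\in V$. *)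

(* Defs.v *)
From HB Require Import structures.
From mathcomp Require Import all_boot all_order all_algebra.
Set Implicit Arguments. Unset Strict Implicit. Unset Printing Implicit Defensive.
Import Order.TTheory GRing.Theory Num.Theory.
Local Open Scope ring_scope.

(* Generalized binomial coefficient binom(a, k) for a : int, k : nat:
   a (a-1) ... (a-k+1) / k!.  For a = -(b+1):  (-1)^k * C(b+k, k). *)
Definition binz (a : int) (k : nat) : int :=
  match a with
  | Posz n => ('C(n, k))%:Z
  | Negz n => (-1) ^+ k * ('C((n + k)%N, k))%:Z
  end.

Section Defs.
Variables (F : fieldType) (V : lmodType F).

(* A Z-grading V = (+)_n V_n, given by the family of subspaces Vg n = V_n
   (Vg n v  means  v is homogeneous of degree n). *)
Definition is_Zgrading (Vg : int -> V -> Prop) : Prop :=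
  (forall n, Vg n 0) /\
  (forall n (a : F) x y, Vg n x -> Vg n y -> Vg n (a *: x + y)) /\
  (forall v, exists (s : seq int) (f : int -> V),
      (forall k, Vg k (f k)) /\ v = \sum_(k <- s) f k) /\
  (forall (s : seq int) (f : int -> V), uniq s -> (forall k, Vg k (f k)) ->
      \sum_(k <- s) f k = 0 -> forall k, k \in s -> f k = 0).

(* Y n u v  is the mode  u_n v,  i.e.  Y(u,z)v = sum_n (Y n u v) z^{-n-1}.
   Vertex algebra axioms (over a field): bilinearity, truncation, vacuum,
   creation, and the Jacobi identity in its component (Borcherds) form
     sum_i binom(m,i) (u_{l+i} v)_{m+n-i} w
       = sum_i (-1)^i binom(l,i) (u_{l+m-i} v_{n+i} w - (-1)^l v_{l+n-i} u_{m+i} w).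
   The (finitely supported) infinite sums are expressed as partial sums over
   any range i < K beyond which all the relevant modes vanish. *)
Definition is_vertex_algebra (Y : int -> V -> V -> V) (vac : V) : Prop :=
  (forall n (a : F) u u' v, Y n (a *: u + u') v = a *: Y n u v + Y n u' v) /\
  (forall n (a : F) u v v', Y n u (a *: v + v') = a *: Y n u v + Y n u v') /\
  (forall u v, exists N : int, forall n, N <= n -> Y n u v = 0) /\
  (forall n v, Y n vac v = if n == -1 then v else 0) /\
  (forall v, Y (-1) v vac = v) /\
  (forall n v, 0 <= n -> Y n v vac = 0) /\
  (forall u v w (l m n : int) (K : nat),
      (forall i : nat, (K <= i)%N ->
         [/\ Y (l + i%:Z) u v = 0, Y (n + i%:Z) v w = 0 & Y (m + i%:Z) u w = 0]) ->
      \sum_(i < K) (binz m i)%:~R *: Y (m + n - i%:Z) (Y (l + i%:Z) u v) w =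
      \sum_(i < K) ((-1) ^+ i * (binz l i)%:~R) *:
          (Y (l + m - i%:Z) u (Y (n + i%:Z) v w)
           - (-1) ^+ (absz l) *: Y (l + n - i%:Z) v (Y (m + i%:Z) u w))).

(* D^{(n)} v = v_{-n-1} 1 ; this is also L_{-1}^{(n)}. *)
Definition Dop (Y : int -> V -> V -> V) (vac : V) (n : nat) (v : V) : V :=
  Y (- (n%:Z) - 1) v vac.

Definition is_Zgraded_VA (Y : int -> V -> V -> V) (vac : V)
    (Vg : int -> V -> Prop) : Prop :=
  is_vertex_algebra Y vac /\ is_Zgrading Vg /\ Vg 0 vac /\
  (forall m n r u v, Vg m u -> Vg n v -> Vg (m + n - r - 1) (Y r u v)).

(* Z-graded weight H-module structure on V in which L_{-1}^{(n)} = Lm1 n and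
   L_1^{(n)} = L1 n; L_0^{(r)} acts on V_n by binom(-2n, r) (hence is determined
   by the grading).  The H-action is encoded by Kostant's divided-power
   relations of U(sl_2)_Z on weight modules (with e = L_1, f = -L_{-1},
   h = -2 L_0):
     L_1^{(m)} L_{-1}^{(n)} w
       = sum_{k <= min(m,n)} (-1)^k binom(m - n - 2d, k) L_{-1}^{(n-k)} L_1^{(m-k)} w
   for w in V_d. *)
Definition is_Zgraded_weight_H_module (Vg : int -> V -> Prop)
    (Lm1 L1 : nat -> V -> V) : Prop :=
  (forall r (a : F) x y, L1 r (a *: x + y) = a *: L1 r x + L1 r y) /\
  (forall r (a : F) x y, Lm1 r (a *: x + y) = a *: Lm1 r x + Lm1 r y) /\
  (forall v, L1 0 v = v) /\ (forall v, Lm1 0 v = v) /\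
  (forall m n v, L1 m (L1 n v) = ('C((m + n)%N, n))%:R *: L1 (m + n)%N v) /\
  (forall m n v, Lm1 m (Lm1 n v) = ('C((m + n)%N, n))%:R *: Lm1 (m + n)%N v) /\
  (forall d r v, Vg d v -> Vg (d - r%:Z) (L1 r v)) /\
  (forall d r v, Vg d v -> Vg (d + r%:Z) (Lm1 r v)) /\
  (forall d m n w, Vg d w ->
     L1 m (Lm1 n w) =
     \sum_(k < (minn m n).+1)
        ((-1) ^+ k * (binz (m%:Z - n%:Z - 2 * d) k)%:~R) *:
          Lm1 (n - k)%N (L1 (m - k)%N w)).

(* Componentwise form of the conjugation formula
     e^{zL_1} Y(v,z_0) e^{-zL_1}
        = Y(e^{z(1-zz_0)L_1}(1-zz_0)^{-2deg} v, z_0/(1-zz_0)),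
   obtained by taking the coefficient of z^k z_0^{-n-1} (v homogeneous of
   degree d; the general case follows by linearity). *)
Definition L1_conjugation (Y : int -> V -> V -> V) (Vg : int -> V -> Prop)
    (L1 : nat -> V -> V) : Prop :=
  forall d v, Vg d v -> forall w (k : nat) (n : int),
    \sum_(a < k.+1) (-1) ^+ (k - a)%N *: L1 a (Y n v (L1 (k - a)%N w)) =
    \sum_(i < k.+1) ((-1) ^+ i * (binz (k%:Z - 2 * d + n + 1) i)%:~R) *:
        Y (n + i%:Z) (L1 (k - i)%N v) w.

Definition is_H_module_VA (Y : int -> V -> V -> V) (vac : V)
    (Vg : int -> V -> Prop) (L1 : nat -> V -> V) : Prop :=
  is_Zgraded_VA Y vac Vg /\
  is_Zgraded_weight_H_module Vg (Dop Y vac) L1 /\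
  (exists N : int, forall n, n < N -> forall v, Vg n v -> v = 0) /\
  (forall n, L1 n vac = if n == 0%N then vac else 0) /\
  L1_conjugation Y Vg L1.

Definition is_bilinear_form (form : V -> V -> F) : Prop :=
  (forall (a : F) x y z, form (a *: x + y) z = a * form x z + form y z) /\
  (forall (a : F) x y z, form z (a *: x + y) = a * form z x + form z y).

(* Invariance  (Y(v,z)w, w') = (w, Y(e^{zL_1}(-z^{-2})^{deg} v, z^{-1}) w'),
   componentwise: for v in V_d, the coefficient of z^{-n-1} gives
     (v_n w, w') = (-1)^d sum_{j>=0} (w, (L_1^{(j)} v)_{2d-n-2-j} w'),
   the sum over j being finite (taken over any range j < K beyond which
   L_1^{(j)} v = 0). *)
Definition is_invariant_form (Y : int -> V -> V -> V) (Vg : int -> V -> Prop)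
    (L1 : nat -> V -> V) (form : V -> V -> F) : Prop :=
  forall d v, Vg d v -> forall w w' (n : int) (K : nat),
    (forall j, (K <= j)%N -> L1 j v = 0) ->
    form (Y n v w) w' =
    (-1) ^+ (absz d) * \sum_(j < K) form w (Y (2 * d - n - 2 - j%:Z) (L1 j v) w').

End Defs.

(* Main.v *)
Require Import Defs.
From HB Require Import structures.
From mathcomp Require Import all_boot all_order all_algebra.
From mathcomp Require Import zify.
Import Order.TTheory GRing.Theory Num.Theory.
Local Open Scope ring_scope.

Lemma alt_binom (R : comPzRingType) (N s : nat) : (s < N)%N ->
  \sum_(j < N) (-1) ^+ j * ('C(s, j))%:R = (s == 0%N)%:R :> R.
Proof.
move=> sN.
have -> : N = (s.+1 + (N - s.+1))%N by rewrite subnKC.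
rewrite big_split_ord /=.
rewrite [X in _ + X]big1 ?addr0; last first.
  by move=> i _; rewrite bin_small ?mulr0 // ltnS leq_addr.
transitivity ((1 - 1 : R) ^+ s); last by rewrite subrr expr0n.
rewrite exprBn.
by apply: eq_bigr => i _; rewrite !expr1n !mulr1 mulr_natr.
Qed.

Lemma shift_sum (R : comPzRingType) (N j : nat) (T : nat -> R) :
  (forall s, (N <= s)%N -> T s = 0) ->
  \sum_(k < N) ('C(k + j, j))%:R * T (k + j)%N =
  \sum_(s < N) ('C(s, j))%:R * T s.
Proof.
move=> HT.
transitivity (\sum_(s < j + N) ('C(s, j))%:R * T s :> R).
  rewrite big_split_ord /= [X in _ = X + _]big1 ?add0r; last first.
    by move=> i _; rewrite bin_small ?mul0r.
  by apply: eq_bigr => i _; rewrite addnC.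
rewrite addnC big_split_ord /= [X in _ + X]big1 ?addr0 //.
by move=> i _; rewrite HT ?mulr0 // leq_addr.
Qed.

Lemma comb_id (R : comPzRingType) (N : nat) (T : nat -> R) :
  (0 < N)%N -> (forall s, (N <= s)%N -> T s = 0) ->
  \sum_(j < N) (-1) ^+ j * \sum_(k < N) ('C(k + j, j))%:R * T (k + j)%N = T 0%N.
Proof.
move=> N0 HT.
under eq_bigr => j _ do rewrite shift_sum // mulr_sumr.
rewrite exchange_big /=.
transitivity (\sum_(s < N) (\sum_(j < N) (-1) ^+ j * ('C(s, j))%:R) * T s :> R).
  apply: eq_bigr => s _; rewrite big_distrl /=.
  by apply: eq_bigr => j _; rewrite mulrA.
under eq_bigr => s _ do rewrite (@alt_binom _ _ _ (ltn_ord s)).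
case: N N0 HT => // N _ HT.
rewrite big_ord_recl /= mul1r big1 ?addr0 //.
by move=> i _; rewrite mul0r.
Qed.

Theorem lemma4p5 (F : closedFieldType) (p : nat) (V : lmodType F) (vac : V)
    (Y : int -> V -> V -> V) (Vg : int -> V -> Prop) (L1 : nat -> V -> V)
    (form : V -> V -> F) :
  prime p -> odd p -> p \in [pchar F] ->
  is_H_module_VA Y vac Vg L1 ->
  (forall n : int, n < 0 -> forall v, Vg n v -> v = 0) ->
  is_bilinear_form form ->
  is_invariant_form Y Vg L1 form ->
  (forall (m n : int) u v, m != n -> Vg m u -> Vg n v -> form u v = 0) ->
  forall u v, form u v = form v u.
Proof.
move=> _ _ _ [[VA [GR [Vvac Ydeg]]] [HW [_ [_ _]]]] Hneg [Fl Fr] Hinv Horth.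
case: VA => Ylin1 [_ [_ [_ [Ycre _]]]].
case: GR => G0 [Glin [Gspan _]].
case: HW => L1lin [_ [L10 [_ [L1L1 [_ [L1deg _]]]]]].
have selfV : forall x : V, x = x + x -> x = 0.
  by move=> x H; have := addrK x x; rewrite -H subrr => ->.
have selfF : forall x : F, x = x + x -> x = 0.
  by move=> x H; have := addrK x x; rewrite -H subrr => ->.
have Y0 : forall n v, Y n 0 v = 0.
  by move=> n v; have := Ylin1 n 1 0 0 v; rewrite !scale1r addr0 => H; exact: selfV H.
have YZ : forall n a u v, Y n (a *: u) v = a *: Y n u v.
  by move=> n a u v; have := Ylin1 n a u 0 v; rewrite addr0 Y0 addr0.
have F0l : forall z, form 0 z = 0.
  by move=> z; have := Fl 1 0 0 z; rewrite scale1r addr0 mul1r => H; exact: selfF H.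
have F0r : forall z, form z 0 = 0.
  by move=> z; have := Fr 1 0 0 z; rewrite scale1r addr0 mul1r => H; exact: selfF H.
have FZr : forall z a x, form z (a *: x) = a * form z x.
  by move=> z a x; have := Fr a x 0 z; rewrite addr0 F0r addr0.
have FDl : forall x y z, form (x + y) z = form x z + form y z.
  by move=> x y z; have := Fl 1 x y z; rewrite scale1r mul1r.
have FDr : forall x y z, form z (x + y) = form z x + form z y.
  by move=> x y z; have := Fr 1 x y z; rewrite scale1r mul1r.
have hom : forall (n0 : nat) u w, Vg n0%:Z u -> Vg n0%:Z w -> form w u = form u w.
  move=> n0 u w Hu Hw.
  pose K := n0.+1.
  have Kw : forall j, (K <= j)%N -> L1 j w = 0.
    move=> j Hj; apply: (Hneg (n0%:Z - j%:Z)) (L1deg _ _ _ Hw); lia.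
  have step1 := Hinv _ _ Hw vac u (-1) K Kw.
  rewrite Ycre /= in step1; rewrite step1.
  pose T s := form u (Y (- (s%:Z) - 1) (L1 s w) vac).
  have T0 : T 0%N = form u w by rewrite /T L10 Ycre.
  rewrite -T0 -(@comb_id _ K T) //; last first.
    by move=> s Hs; rewrite /T Kw // Y0 F0r.
  rewrite mulr_sumr; apply: eq_bigr => j _.
  have jle : (j <= n0)%N by rewrite -ltnS ltn_ord.
  pose mj : int := 2 * n0%:Z - -1 - 2 - (j : nat)%:Z.
  have HX : Vg 0 (Y mj (L1 j w) u).
    have := Ydeg _ _ mj _ _ (L1deg _ j _ Hw) Hu.
    have -> : n0%:Z - (j : nat)%:Z + n0%:Z - mj - 1 = 0 by rewrite /mj; lia.
    by [].
  have sym0 : form vac (Y mj (L1 j w) u) = form (Y mj (L1 j w) u) vac.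
    have K1 : forall k, (1 <= k)%N -> L1 k (Y mj (L1 j w) u) = 0.
      move=> k Hk; apply: (Hneg (0 - k%:Z)) (L1deg _ _ _ HX); lia.
    have := Hinv _ _ HX vac vac (-1) 1 K1.
    rewrite Ycre big_ord1 /= L10 expr0 mul1r => ->.
    have -> : (2 * 0 - -1 - 2 - (0%N)%:Z : int) = -1 by [].
    by rewrite Ycre.
  rewrite sym0.
  have Kj : forall k, (K <= k)%N -> L1 k (L1 j w) = 0.
    by move=> k Hk; rewrite L1L1 Kw ?scaler0 // (leq_trans Hk) // leq_addr.
  rewrite (Hinv _ _ (L1deg _ j _ Hw) u vac mj K Kj) distnEl // mulrA.
  have -> : (-1) ^+ n0 * (-1) ^+ (n0 - j) = (-1) ^+ j :> F.
    by rewrite -{1}(subnK jle) exprD mulrC signrMK.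
  congr (_ * _); apply: eq_bigr => k _.
  rewrite L1L1 YZ FZr /T; congr (_ * form _ (Y _ _ _)).
  rewrite /mj; lia.
move=> u v.
have [s [f [Hf ->]]] := Gspan u.
have [t [g [Hg ->]]] := Gspan v.
have sumL : forall (r : seq int) (h : int -> V) z,
    form (\sum_(k <- r) h k) z = \sum_(k <- r) form (h k) z.
  move=> r h z; elim: r => [|a r IH]; first by rewrite !big_nil F0l.
  by rewrite !big_cons FDl IH.
have sumR : forall (r : seq int) (h : int -> V) z,
    form z (\sum_(k <- r) h k) = \sum_(k <- r) form z (h k).
  move=> r h z; elim: r => [|a r IH]; first by rewrite !big_nil F0r.
  by rewrite !big_cons FDr IH.
have hkl : forall k l, form (f k) (g l) = form (g l) (f k).
  move=> k l; have [<-|nkl] := eqVneq k l.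
    case: k {Hf Hg} (Hf k) (Hg k) => n0 Hfk Hgk; first exact: (hom n0 _ _ Hgk Hfk).
    by rewrite (Hneg _ _ _ Hfk) // F0l F0r.
  by rewrite (Horth _ _ _ _ nkl (Hf k) (Hg l)) (Horth l k) // eq_sym.
rewrite sumL sumR.
under eq_bigr => k _ do rewrite sumR.
under [RHS]eq_bigr => l _ do rewrite sumL.
apply: eq_bigr => l _; apply: eq_bigr => k _.
exact: hkl.
Qed.
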